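(* Let $f:\mathbb{R}^n\to(-\infty,\infty]$, $g:\mathbb{R}^m\to(-\infty,\infty]$ be closed proper convex, $A\in\mathbb{R}^{m\times n}$, and let $\tau,\sigma>0$, $x^0\in\mathbb{R}^n$, $u^0\in\mathbb{R}^m$, $y^0\in\mathbb{R}^m$ be given with $u^0=Ax^0$. Algorithm CP-$xy\bar y$: set $\bar y^0=y^0$ and for $k\ge0$ compute $x^{k+1}=\mathrm{prox}^f_\tau(x^k-\tau A^\top\bar y^k)$, $y^{k+1}=\mathrm{prox}^{g^*}_\sigma(y^k+\sigma Ax^{k+1})$, $\bar y^{k+1}=2y^{k+1}-y^k$. Algorithm LADMP-$xuy$: for $k\ge0$ compute $x^{k+1}=\mathrm{prox}^f_\tau\big(x^k-\tau\nabla_x\mathcal{Q}^\sigma_P(x^k,u^k,y^k)\big)$, $u^{k+1}=\mathrm{prox}^g_{\sigma^{-1}}(\sigma^{-1}y^k+Ax^{k+1})$, $y^{k+1}=y^k-\sigma(u^{k+1}-Ax^{k+1})$. Then, started from the same $(x^0,y^0)$, both algorithms generate exactly the same sequence $\{(x^k,y^k)\}_{k\ge1}$.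
   Context: For a closed proper convex $h:\mathbb{R}^d\to(-\infty,\infty]$ and $\gamma>0$, $\mathrm{prox}^h_\gamma(x):=\arg\min_z\{h(z)+\frac{1}{2\gamma}\|z-x\|^2\}$. The conjugate is $h^*(x)=\sup_z\{\langle x,z\rangle-h(z)\}$. For $x\in\mathbb{R}^n$, $u,y\in\mathbb{R}^m$, $\mathcal{Q}^\sigma_P(x,u,y):=\frac{\sigma}{2}\|u-Ax-\sigma^{-1}y\|^2-\frac{1}{2\sigma}\|y\|^2$, so $\nabla_x\mathcal{Q}^\sigma_P(x,u,y)=-\sigma A^\top(u-Ax-\sigma^{-1}y)$. *)

(* Defs.v *)
From mathcomp Require Import ssreflect ssrfun ssrbool eqtype ssrnat seq fintype bigop.
From Stdlib Require Import Reals.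
Set Implicit Arguments. Unset Strict Implicit. Unset Printing Implicit Defensive.
Open Scope R_scope.

Definition vec (n : nat) := 'I_n -> R.
Definition mat (m n : nat) := 'I_m -> 'I_n -> R.

Definition vadd n (x y : vec n) : vec n := fun i => x i + y i.
Definition vsub n (x y : vec n) : vec n := fun i => x i - y i.
Definition vscale n (a : R) (x : vec n) : vec n := fun i => a * x i.
Definition inner n (x y : vec n) : R := \big[Rplus/0]_(i < n) (x i * y i).
Definition nsq n (x : vec n) : R := inner x x.
Definition mulv m n (A : mat m n) (x : vec n) : vec m :=
  fun i => \big[Rplus/0]_(j < n) (A i j * x j).
Definition mulTv m n (A : mat m n) (y : vec m) : vec n :=
  fun j => \big[Rplus/0]_(i < m) (A i j * y i).

Inductive ER := Fin (r : R) | PInf.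

Definition le_ER (e : ER) (a : R) : Prop :=
  match e with Fin r => r <= a | PInf => False end.

Definition proper n (h : vec n -> ER) : Prop := exists x, h x <> PInf.

(* convexity: the epigraph is convex *)
Definition convex n (h : vec n -> ER) : Prop :=
  forall (x y : vec n) (a b t : R), 0 <= t <= 1 ->
    le_ER (h x) a -> le_ER (h y) b ->
    le_ER (h (vadd (vscale t x) (vscale (1 - t) y))) (t * a + (1 - t) * b).

(* closedness: the epigraph is a closed subset of R^n x R *)
Definition closed n (h : vec n -> ER) : Prop :=
  forall (x : vec n) (a : R),
    (forall eps, 0 < eps -> exists (y : vec n) (b : R),
        nsq (vsub y x) + (b - a) ^ 2 < eps /\ le_ER (h y) b) ->
    le_ER (h x) a.

Definition closed_proper_convex n (h : vec n -> ER) : Prop :=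
  closed h /\ proper h /\ convex h.

(* hs is the convex conjugate of h: hs y = sup_z { <y,z> - h z } in (-oo,+oo]. *)
Definition conj_set n (h : vec n -> ER) (y : vec n) : R -> Prop :=
  fun t => exists (z : vec n) (r : R), h z = Fin r /\ t = inner y z - r.

Definition is_conjugate n (h hs : vec n -> ER) : Prop :=
  forall y : vec n,
    (forall s, hs y = Fin s <-> is_lub (conj_set h y) s) /\
    (hs y = PInf <-> ~ bound (conj_set h y)).

Definition is_prox n (h : vec n -> ER) (gamma : R) (x p : vec n) : Prop :=
  exists hp, h p = Fin hp /\
    forall (z : vec n) (r : R), h z = Fin r ->
      hp + / (2 * gamma) * nsq (vsub p x) <= r + / (2 * gamma) * nsq (vsub z x).

Definition gradQ m n (A : mat m n) (sigma : R) (x : vec n) (u y : vec m) : vec n :=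
  vscale (- sigma) (mulTv A (vsub (vsub u (mulv A x)) (vscale (/ sigma) y))).

(* Main.v *)
Require Import Defs.
From HB Require Import structures.
From mathcomp Require Import ssreflect ssrfun ssrbool eqtype ssrnat seq fintype bigop.
From Stdlib Require Import Reals Lra Psatz FunctionalExtensionality.
Open Scope R_scope.
Set Implicit Arguments. Unset Strict Implicit.

HB.instance Definition _ := Monoid.isComLaw.Build R 0 Rplus (fun a b c => esym (Rplus_assoc a b c)) Rplus_comm Rplus_0_l.

Lemma sumD n (F G : 'I_n -> R) :
  \big[Rplus/0]_(i < n) (F i + G i) = \big[Rplus/0]_(i < n) F i + \big[Rplus/0]_(i < n) G i.
Proof. by rewrite big_split. Qed.

Lemma sumZ n a (F : 'I_n -> R) :
  \big[Rplus/0]_(i < n) (a * F i) = a * \big[Rplus/0]_(i < n) F i.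
Proof.
apply: (big_ind2 (fun u v => u = a * v)) => //; first by ring.
by move=> ? ? ? ? -> ->; ring.
Qed.

Lemma sum_ge0 n (F : 'I_n -> R) : (forall i, 0 <= F i) -> 0 <= \big[Rplus/0]_(i < n) F i.
Proof. move=> H; apply: big_ind => //; [lra| move=> ? ? ? ?; lra]. Qed.

Lemma inner_sym n (x y : vec n) : inner x y = inner y x.
Proof. apply: eq_bigr => i _; ring. Qed.
Lemma inner_addl n (x y z : vec n) : inner (vadd x y) z = inner x z + inner y z.
Proof. rewrite /inner -sumD; apply: eq_bigr => i _; rewrite /vadd; ring. Qed.
Lemma inner_scalel n a (x z : vec n) : inner (vscale a x) z = a * inner x z.
Proof. rewrite /inner -sumZ; apply: eq_bigr => i _; rewrite /vscale; ring. Qed.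
Lemma inner_subl n (x y z : vec n) : inner (vsub x y) z = inner x z - inner y z.
Proof.
have -> : vsub x y = vadd x (vscale (-1) y) by apply: functional_extensionality => i; rewrite /vsub /vadd /vscale; ring.
rewrite inner_addl inner_scalel; ring.
Qed.
Lemma inner_addr n (x y z : vec n) : inner z (vadd x y) = inner z x + inner z y.
Proof. by rewrite inner_sym inner_addl !(inner_sym z). Qed.
Lemma inner_subr n (x y z : vec n) : inner z (vsub x y) = inner z x - inner z y.
Proof. by rewrite inner_sym inner_subl !(inner_sym z). Qed.
Lemma inner_scaler n a (x z : vec n) : inner z (vscale a x) = a * inner z x.
Proof. by rewrite inner_sym inner_scalel (inner_sym z). Qed.
Lemma nsq_ge0 n (x : vec n) : 0 <= nsq x.
Proof. apply: sum_ge0 => i; nra. Qed.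
Lemma nsq_eq0 n (x : vec n) : nsq x <= 0 -> forall i, x i = 0.
Proof.
move=> H i.
have: x i * x i <= nsq x.
  rewrite /nsq /inner (bigD1 i) //=.
  have h := @sum_ge0 n (fun j : 'I_n => if j != i then x j * x j else 0).
  rewrite -big_mkcond /= in h.
  have : 0 <= \big[Rplus/0]_(j < n | j != i) (x j * x j).
    apply: h => j; case: (j != i); [nra|lra].
  move=> h3; rewrite -{1}(Rplus_0_r (x i * x i)); apply: Rplus_le_compat_l; exact: h3.
move=> h2; nra.
Qed.

Ltac inexp := rewrite /nsq ?inner_subl ?inner_subr ?inner_addl ?inner_addr ?inner_scalel ?inner_scaler
   ?inner_subl ?inner_subr ?inner_addl ?inner_addr ?inner_scalel ?inner_scaler.

Lemma mid_id n (p q x : vec n) :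
  2 * nsq (vsub (vadd (vscale (/2) p) (vscale (1 - /2) q)) x) =
  nsq (vsub p x) + nsq (vsub q x) - /2 * nsq (vsub p q).
Proof.
inexp. rewrite (inner_sym q p) (inner_sym x p) (inner_sym x q). field.
Qed.

Lemma prox_unique n (h : vec n -> ER) gam x p q :
  convex h -> 0 < gam -> is_prox h gam x p -> is_prox h gam x q -> p = q.
Proof.
move=> hc hg [hp [Hp Pp]] [hq [Hq Pq]].
have := hc p q hp hq (/2) ltac:(lra) ltac:(rewrite Hp /=; lra) ltac:(rewrite Hq /=; lra).
case E: (h _) => [r|] //= Hr.
have h1 := Pp _ r E; have h2 := Pq _ r E.
have hid := mid_id p q x.
have c0 : 0 < / (2 * gam) by apply: Rinv_0_lt_compat; lra.
have hD : / (2 * gam) * nsq (vsub p q) <= 0 by nra.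
have hD' : nsq (vsub p q) <= 0.
  have := nsq_ge0 (vsub p q); nra.
apply: functional_extensionality => i.
have := nsq_eq0 hD' i; rewrite /vsub; lra.
Qed.

Lemma conj_convex n (g gs : vec n -> ER) : is_conjugate g gs -> convex gs.
Proof.
move=> Hc y1 y2 a b t ht.
case E1: (gs y1) => [s1|] //= h1; case E2: (gs y2) => [s2|] //= h2.
have L1 := proj1 (proj1 (Hc y1) s1) E1.
have L2 := proj1 (proj1 (Hc y2) s2) E2.
set ym := vadd _ _.
have ub : is_upper_bound (conj_set g ym) (t*s1 + (1-t)*s2).
  move=> w [z [r [Hz ->]]]. rewrite /ym inner_addl !inner_scalel.
  have i1 := proj1 L1 (inner y1 z - r) (ex_intro _ z (ex_intro _ r (conj Hz erefl))).
  have i2 := proj1 L2 (inner y2 z - r) (ex_intro _ z (ex_intro _ r (conj Hz erefl))).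
  nra.
case Em: (gs ym) => [s|] /=.
  have Lm := proj1 (proj1 (Hc ym) s) Em.
  have := proj2 Lm _ ub. nra.
by apply: (proj1 (proj2 (Hc ym)) Em); exists (t*s1 + (1-t)*s2).
Qed.

Lemma lim_arg a b K : 0 <= K -> (forall t, 0 < t <= 1 -> a <= b + K * t) -> a <= b.
Proof.
move=> hK H; case: (Rle_dec a b) => // hab; exfalso.
set t := Rmin 1 ((a-b)/(2*(K+1))).
have ht1 : t <= 1 by apply: Rmin_l.
have ht2 : t <= (a-b)/(2*(K+1)) by apply: Rmin_r.
have ht0 : 0 < t.
  rewrite /t; apply: Rmin_glb_lt; first lra.
  apply: Rdiv_lt_0_compat; lra.
have := H t (conj ht0 ht1).
have : t * (2*(K+1)) <= a - b.
  have := Rmult_le_compat_r (2*(K+1)) _ _ ltac:(lra) ht2.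
  by rewrite /Rdiv Rmult_assoc Rinv_l; [rewrite Rmult_1_r | lra].
nra.
Qed.

Lemma pt_id n (t : R) (w u c : vec n) :
  nsq (vsub (vadd (vscale t w) (vscale (1-t) u)) c) =
  nsq (vsub u c) + 2*t*inner (vsub w u) (vsub u c) + t^2 * nsq (vsub w u).
Proof.
inexp. rewrite (inner_sym u w) (inner_sym c w) (inner_sym c u). ring.
Qed.

Lemma prox_subgrad n (g : vec n -> ER) s c u : convex g -> 0 < s -> is_prox g (/s) c u ->
  exists gu, g u = Fin gu /\ forall w rw, g w = Fin rw ->
     gu + inner (vscale s (vsub c u)) (vsub w u) <= rw.
Proof.
move=> hc hs [gu [Hu P]]; exists gu; split => // w rw Hw.
have hk : / (2 * / s) = s / 2 by field; lra.
rewrite hk in P.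
rewrite inner_scalel.
have -> : inner (vsub c u) (vsub w u) = - inner (vsub w u) (vsub u c).
  inexp. rewrite (inner_sym u w) (inner_sym c w) (inner_sym c u). ring.
apply: (@lim_arg _ _ (s/2 * nsq (vsub w u))).
  have := nsq_ge0 (vsub w u); nra.
move=> t ht.
have := hc w u rw gu t ltac:(lra) ltac:(rewrite Hw /=; lra) ltac:(rewrite Hu /=; lra).
case E: (g _) => [r|] //= Hr.
have := P _ r E. rewrite pt_id.
set I := inner _ _; set N := nsq (vsub w u); set M := nsq (vsub u c) => h.
have h2 : t * gu <= t * (rw + s * I + s / 2 * N * t) by nra.
have := Rmult_le_reg_l t _ _ ltac:(lra) h2. lra.
Qed.

Lemma moreau n (g gs : vec n -> ER) s v u : convex g -> 0 < s -> is_conjugate g gs ->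
  is_prox g (/s) (vscale (/s) v) u -> is_prox gs s v (vsub v (vscale s u)).
Proof.
move=> hc hs Hc Hp.
have [gu [Hu Sg]] := prox_subgrad hc hs Hp.
set y' := vsub v (vscale s u).
have ey : vscale s (vsub (vscale (/s) v) u) = y'.
  apply: functional_extensionality => i; rewrite /y' /vscale /vsub; field; lra.
rewrite ey in Sg.
have lub : is_lub (conj_set g y') (inner y' u - gu).
  split.
    move=> w [z [r [Hz ->]]]. have := Sg z r Hz. rewrite inner_subr. lra.
  move=> b Hb; apply: Hb; exists u, gu; split => //.
have Hgs : gs y' = Fin (inner y' u - gu).
  case E: (gs y') => [s'|].
    have L := proj1 (proj1 (Hc y') s') E.
    have h1 := proj2 L _ (proj1 lub); have h2 := proj2 lub _ (proj1 L).
    by rewrite (Rle_antisym _ _ h1 h2).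
  exfalso; apply: (proj1 (proj2 (Hc y')) E); exists (inner y' u - gu); exact: (proj1 lub).
exists (inner y' u - gu); split => // z r Hz.
have L := proj1 (proj1 (Hc z) r) Hz.
have hzr := proj1 L _ (ex_intro _ u (ex_intro _ gu (conj Hu erefl))).
have key : r + / (2 * s) * nsq (vsub z v) - (inner y' u - gu + / (2 * s) * nsq (vsub y' v))
   = (r - (inner z u - gu)) + / (2 * s) * nsq (vsub z y').
  rewrite /y'. inexp.
  rewrite (inner_sym u v) (inner_sym v z) (inner_sym u z). field. lra.
have := nsq_ge0 (vsub z y').
have : 0 < / (2 * s) by apply: Rinv_0_lt_compat; lra.
nra.
Qed.

Lemma mulTv_scale m n (A : mat m n) c w : mulTv A (vscale c w) = vscale c (mulTv A w).
Proof.
apply: functional_extensionality => j; rewrite /mulTv /vscale -sumZ.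
apply: eq_bigr => i _; ring.
Qed.

Theorem theorem2p3
  (n m : nat) (f : vec n -> ER) (g : vec m -> ER) (A : mat m n)
  (tau sigma : R) (x0 : vec n) (u0 y0 : vec m) :
  closed_proper_convex f -> closed_proper_convex g ->
  0 < tau -> 0 < sigma -> u0 = mulv A x0 ->
  forall gs : vec m -> ER, is_conjugate g gs ->
  (* Algorithm CP-x y ybar *)
  forall (xc : nat -> vec n) (yc ybc : nat -> vec m),
  xc 0%nat = x0 -> yc 0%nat = y0 -> ybc 0%nat = y0 ->
  (forall k : nat,
     is_prox f tau (vsub (xc k) (vscale tau (mulTv A (ybc k)))) (xc (S k)) /\
     is_prox gs sigma (vadd (yc k) (vscale sigma (mulv A (xc (S k))))) (yc (S k)) /\
     ybc (S k) = vsub (vscale 2 (yc (S k))) (yc k)) ->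
  (* Algorithm LADMP-x u y *)
  forall (xl : nat -> vec n) (ul yl : nat -> vec m),
  xl 0%nat = x0 -> ul 0%nat = u0 -> yl 0%nat = y0 ->
  (forall k : nat,
     is_prox f tau (vsub (xl k) (vscale tau (gradQ A sigma (xl k) (ul k) (yl k)))) (xl (S k)) /\
     is_prox g (/ sigma) (vadd (vscale (/ sigma) (yl k)) (mulv A (xl (S k)))) (ul (S k)) /\
     yl (S k) = vsub (yl k) (vscale sigma (vsub (ul (S k)) (mulv A (xl (S k)))))) ->
  forall k : nat, (1 <= k)%nat -> xc k = xl k /\ yc k = yl k.
Proof.
move=> [_ [_ fc]] [_ [_ gc]] ht hs Hu0 gs Hc xc yc ybc X0 Y0 B0 HC xl ul yl X0' U0' Y0' HL.
have gsc := conj_convex Hc.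
suff main : forall k, xc k = xl k /\ yc k = yl k /\
   ybc k = vadd (yl k) (vscale sigma (vsub (mulv A (xl k)) (ul k))).
  by move=> k _; have [? [? _]] := main k.
elim=> [|k [ex [ey eb]]].
  split; first by rewrite X0 X0'.
  split; first by rewrite Y0 Y0'.
  rewrite B0 Y0' U0' X0' Hu0; apply: functional_extensionality => i.
  rewrite /vadd /vscale /vsub; ring.
have [Cx [Cy Cb]] := HC k; have [Lx [Lu Ly]] := HL k.
have eg : gradQ A sigma (xl k) (ul k) (yl k) = mulTv A (ybc k).
  rewrite /gradQ eb -mulTv_scale; congr (mulTv A _).
  apply: functional_extensionality => i; rewrite /vadd /vscale /vsub; field; lra.
rewrite eg -ex in Lx.
have ex' : xc (S k) = xl (S k) := prox_unique fc ht Cx Lx.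
set v := vadd (yl k) (vscale sigma (mulv A (xl (S k)))).
have ev : vadd (vscale (/ sigma) (yl k)) (mulv A (xl (S k))) = vscale (/sigma) v.
  apply: functional_extensionality => i; rewrite /v /vadd /vscale; field; lra.
rewrite ev in Lu.
have My := moreau gc hs Hc Lu.
have eyl : yl (S k) = vsub v (vscale sigma (ul (S k))).
  rewrite Ly; apply: functional_extensionality => i; rewrite /v /vadd /vscale /vsub; ring.
rewrite ex' ey -/v in Cy; rewrite -eyl in My.
have ey' : yc (S k) = yl (S k) := prox_unique gsc hs Cy My.
split => //; split => //.
rewrite Cb ey' ey; apply: functional_extensionality => i.
rewrite Ly /vadd /vscale /vsub; ring.
Qed.
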